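(* For generic $u\in\mathbb{C}$ and generic $v,w\in\mathbb{C}$ (in particular with all entries defined), the following commutation relations hold: $$[M^{cl}(v),M^{cl}(w)]=0,\qquad [M^{q}(v),M^{q}(w)]=0 .$$
   Context: All matrices are $2N\times 2N$ complex matrices, indexed by $1,\dots,2N$. Entries not listed are zero, and only index pairs lying in $\{1,\dots,2N\}^2$ are meant. Here $\mathrm{i}$ is the imaginary unit, $\lambda_{cl}(v)=\tanh(v)\coth(u-v)$ and $\lambda_q(v)=\tanh(u-v)\coth(v)$. In all formulas $1\le i\le N$, $1\le j\le 2N$ and $k\ge 1$. The matrix $M^{cl}(v)$ is lower triangular, with entries - $M^{cl}_{2i-1,2i-1}=-\mathrm{i}\coth(u-v)$ and $M^{cl}_{2i,2i}=\mathrm{i}\tanh(v)$; - $M^{cl}_{2i-1+2k,\,2i-1}=-\mathrm{i}\,\lambda_{cl}^{k-1}/(\coth(v)\sinh^2(u-v))$; - $M^{cl}_{2i+2k,\,2i}=-\mathrm{i}\,\lambda_{cl}^{k-1}/(\tanh(u-v)\cosh^2(v))$; - $M^{cl}_{j+2k-1,\,j}=-\mathrm{i}\,\lambda_{cl}^{k-1}/(\cosh(v)\sinh(u-v))$. The matrix $M^{q}(v)$ is upper triangular, with entries - $M^{q}_{2i-1,2i-1}=-\mathrm{i}\tanh(u-v)$ and $M^{q}_{2i,2i}=\mathrm{i}\coth(v)$; - $M^{q}_{2i-1,\,2i-1+2k}=\mathrm{i}\,\lambda_q^{k-1}/(\tanh(v)\cosh^2(u-v))$; - $M^{q}_{2i,\,2i+2k}=\mathrm{i}\,\lambda_q^{k-1}/(\coth(u-v)\sinh^2(v))$;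 - $M^{q}_{j,\,j+2k-1}=\mathrm{i}\,\lambda_q^{k-1}/(\sinh(v)\cosh(u-v))$. The matrices $M^{cl}(w)$ and $M^{q}(w)$ are defined by the same formulas with $v$ replaced by $w$. *)

(* Defs.v *)
From mathcomp Require Import all_boot all_algebra.
From mathcomp Require Import complex.
From mathcomp Require Import reals.
From mathcomp.analysis Require Import sequences exp trigo.
Set Implicit Arguments. Unset Strict Implicit. Unset Printing Implicit Defensive.
Import GRing.Theory Num.Theory.
Local Open Scope ring_scope.
Local Open Scope complex_scope.

Section Hyperbolic.
Variable R : realType.

Definition cexp (z : R[i]) : R[i] :=
  let: a +i* b := z in (expR a)%:C * ((cos b)%:C + 'i * (sin b)%:C).

Definition csinh (z : R[i]) : R[i] := (cexp z - cexp (- z)) / 2%:R.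
Definition ccosh (z : R[i]) : R[i] := (cexp z + cexp (- z)) / 2%:R.
Definition ctanh (z : R[i]) : R[i] := csinh z / ccosh z.
Definition ccoth (z : R[i]) : R[i] := ccosh z / csinh z.

Definition lam_cl (u v : R[i]) : R[i] := ctanh v * ccoth (u - v).
Definition lam_q  (u v : R[i]) : R[i] := ctanh (u - v) * ccoth v.

(* entries with 1-based row index r and column index c *)
Definition Mcl_entry (u v : R[i]) (r c : nat) : R[i] :=
  if r == c then
    (if odd c then - 'i * ccoth (u - v) else 'i * ctanh v)
  else if (c < r)%N then
    let d := (r - c)%N in
    if odd d then (* d = 2k-1, k-1 = d./2 *)
      - 'i * lam_cl u v ^+ (d./2) / (ccosh v * csinh (u - v))
    else if odd c then (* d = 2k, c = 2i-1, k-1 = (d./2).-1 *)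
      - 'i * lam_cl u v ^+ (d./2).-1 / (ccoth v * csinh (u - v) ^+ 2)
    else
      - 'i * lam_cl u v ^+ (d./2).-1 / (ctanh (u - v) * ccosh v ^+ 2)
  else 0.

Definition Mq_entry (u v : R[i]) (r c : nat) : R[i] :=
  if r == c then
    (if odd r then - 'i * ctanh (u - v) else 'i * ccoth v)
  else if (r < c)%N then
    let d := (c - r)%N in
    if odd d then
      'i * lam_q u v ^+ (d./2) / (csinh v * ccosh (u - v))
    else if odd r then
      'i * lam_q u v ^+ (d./2).-1 / (ctanh v * ccosh (u - v) ^+ 2)
    else
      'i * lam_q u v ^+ (d./2).-1 / (ccoth (u - v) * csinh v ^+ 2)
  else 0.

(* 2N x 2N matrices; ordinal a : 'I_(2N) corresponds to the 1-based index a+1 *)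
Definition Mcl (N : nat) (u v : R[i]) : 'M[R[i]]_(2 * N) :=
  \matrix_(a, b) Mcl_entry u v a.+1 b.+1.
Definition Mq (N : nat) (u v : R[i]) : 'M[R[i]]_(2 * N) :=
  \matrix_(a, b) Mq_entry u v a.+1 b.+1.

End Hyperbolic.

(* Main.v *)
Require Import Defs.
From mathcomp Require Import all_boot all_algebra.
From mathcomp Require Import complex.
From mathcomp Require Import reals.
From mathcomp.analysis Require Import sequences exp trigo.
From mathcomp Require Import ring.
Import GRing.Theory Num.Theory.
Local Open Scope ring_scope.

Section Gen.

Variable K : comPzRingType.

Definition Fg (x y : bool -> K) (s l : K) (d : nat) (p : bool) : K :=
  if d == 0%N then x p else if odd d then l ^+ (d./2) * s else l ^+ (d./2).-1 * y p.

Lemma Fg0 x y s l p : Fg x y s l 0 p = x p. Proof. by []. Qed.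
Lemma Fg_odd x y s l k p : Fg x y s l k.*2.+1 p = l ^+ k * s.
Proof. by rewrite /Fg /= odd_double uphalf_double. Qed.
Lemma Fg_even x y s l k p : Fg x y s l (k.+1).*2 p = l ^+ k * y p.
Proof. by rewrite /Fg doubleS /= odd_double doubleK. Qed.
Lemma Fg_oddI x y s l d p q : odd d -> Fg x y s l d p = Fg x y s l d q.
Proof. by rewrite /Fg; case: d => //= d ->. Qed.

Lemma sum_pairs (f : nat -> K) m :
  \sum_(0 <= j < m.*2) f j = \sum_(0 <= i < m) (f i.*2 + f i.*2.+1).
Proof.
elim: m => [|m IH]; first by rewrite !big_geq.
by rewrite doubleS !big_nat_recr //= IH addrA.
Qed.

Variables (x1 y1 x2 y2 : bool -> K) (s1 s2 l1 l2 : K).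
Hypothesis hI : forall p, s1 * (x2 p - x2 (~~p)) = s2 * (x1 p - x1 (~~p)).
Hypothesis hII : forall p, (l1 - l2) * (s1 * (x2 p - x2 (~~p))) + s1 * (y2 p - y2 (~~p))
   - s2 * (y1 p - y1 (~~p)) = 0.
Local Notation F1 := (Fg x1 y1 s1 l1).
Local Notation F2 := (Fg x2 y2 s2 l2).

Lemma geo_inv p m :
  let D1 n := F1 n p - F1 n (~~p) in
  let D2 n := F2 n p - F2 n (~~p) in
  let A := \sum_(0 <= i < m.+1) l1 ^+ (m - i) * D2 i.*2 in
  let B := \sum_(0 <= i < m.+1) l2 ^+ (m - i) * D1 i.*2 in
  s1 * A = s2 * B /\
  s1 * A * (l1 - l2) = l1 ^+ m * (s2 * (y1 p - y1 (~~p))) - l2 ^+ m * (s1 * (y2 p - y2 (~~p))).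
Proof.
move=> D1 D2.
elim: m => [|m [IH1 IH2]] /=.
  rewrite !big_nat1 !subnn !expr0 !mul1r /D1 /D2 !Fg0 hI; split=> //.
  have := hII p; rewrite hI => h.
  apply/eqP; rewrite -subr_eq0; apply/eqP; rewrite -[RHS]h; ring.
set A := \sum_(0 <= i < m.+1) _ in IH1 IH2.
set B := \sum_(0 <= i < m.+1) _ in IH1.
have eA : \sum_(0 <= i < m.+2) l1 ^+ (m.+1 - i) * D2 i.*2 = l1 * A + l2 ^+ m * (y2 p - y2 (~~p)).
  rewrite big_nat_recr //= subnn expr0 mul1r /D2 !Fg_even -mulrBr; congr (_ + _).
  rewrite /A mulr_sumr big_nat_cond [RHS]big_nat_cond; apply: eq_bigr => i /andP[/andP[_ hi] _].
  by rewrite subSn // exprS mulrA.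
have eB : \sum_(0 <= i < m.+2) l2 ^+ (m.+1 - i) * D1 i.*2 = l2 * B + l1 ^+ m * (y1 p - y1 (~~p)).
  rewrite big_nat_recr //= subnn expr0 mul1r /D1 !Fg_even -mulrBr; congr (_ + _).
  rewrite /B mulr_sumr big_nat_cond [RHS]big_nat_cond; apply: eq_bigr => i /andP[/andP[_ hi] _].
  by rewrite subSn // exprS mulrA.
rewrite eA eB.
have e1 : s1 * (l1 * A + l2 ^+ m * (y2 p - y2 (~~ p))) =
          l1 * (s1 * A) + l2 ^+ m * (s1 * (y2 p - y2 (~~ p))) by ring.
have e2 : s2 * (l2 * B + l1 ^+ m * (y1 p - y1 (~~ p))) =
          l2 * (s2 * B) + l1 ^+ m * (s2 * (y1 p - y1 (~~ p))) by ring.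
rewrite e1 e2 -IH1.
move: (s1 * A) IH2 => X hX.
set a := s1 * _. set b := s2 * _.
split.
  apply/eqP; rewrite -subr_eq0; apply/eqP.
  transitivity (X * (l1 - l2) - (l1 ^+ m * b - l2 ^+ m * a)); first ring.
  by rewrite hX subrr.
transitivity (l1 * (X * (l1 - l2)) + l2 ^+ m * a * (l1 - l2)); first ring.
rewrite hX !exprS /a /b; ring.
Qed.

Lemma sym d p :
  \sum_(0 <= j < d.+1) F1 (d - j) (p (+) odd j) * F2 j p =
  \sum_(0 <= j < d.+1) F2 (d - j) (p (+) odd j) * F1 j p.
Proof.
rewrite [RHS]big_nat_rev /= add0n.
apply/eqP; rewrite -subr_eq0 -sumrB; apply/eqP.
under eq_big_nat => j /andP[_ hj].
  rewrite subSS subKn // [F2 _ _ * _]mulrC; over.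
simpl.
have [od|ev] := boolP (odd d).
- have ed : d = (d./2).*2.+1 by rewrite -[LHS]odd_double_half od add1n.
  move: (d./2) ed => m ->.
  rewrite -doubleS sum_pairs.
  under eq_big_nat => i /andP[_ hi].
    have e0 : (m.*2.+1 - i.*2 = (m - i).*2.+1)%N by rewrite subSn ?leq_double // doubleB.
    have e1 : (m.*2.+1 - i.*2.+1 = (m - i).*2)%N by rewrite subSS doubleB.
    rewrite e0 e1 !odd_double /= !odd_double !addbF !addbT !Fg_odd -mulrBr -mulrBl -[F1 _ (~~ p) - _]opprB mulNr.
    over.
  simpl.
  rewrite big_split /= sumrN.
  rewrite [X in _ - X]big_nat_rev /= add0n.
  under [X in _ - X]eq_big_nat => i /andP[_ hi].
    rewrite subSS subKn //; over.
  simpl.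
  have [h1 _] := geo_inv p m.
  move: h1; rewrite !mulr_sumr => h1.
  apply/eqP; rewrite subr_eq0; apply/eqP.
  transitivity (\sum_(0 <= i < m.+1) s1 * (l1 ^+ (m - i) * (F2 i.*2 p - F2 i.*2 (~~ p)))).
    by apply: eq_bigr => i _; ring.
  rewrite h1; apply: eq_bigr => i _; ring.
- rewrite big_nat_cond; apply: big1 => j /andP[/andP[_ hj] _].
  rewrite (oddN (negbTE ev) hj).
  have [oj|oj] := boolP (odd j).
    have od : odd (d - j) by rewrite (oddN (negbTE ev) hj).
    rewrite addbT (Fg_oddI _ _ _ _ _ (~~ p) p od) (Fg_oddI _ _ _ _ _ (~~ p) p oj).
    by rewrite subrr.
  by rewrite addbF subrr.
Qed.


Lemma sum_window (f : nat -> K) n c r : (c <= r)%N -> (r < n)%N ->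
  (forall j, (j < c)%N -> f j = 0) -> (forall j, (r < j)%N -> f j = 0) ->
  \sum_(0 <= j < n) f j = \sum_(0 <= k < (r - c).+1) f (k + c).
Proof.
move=> hcr hrn h1 h2.
rewrite (big_cat_nat (n := c)) ?(leq_trans hcr (ltnW hrn)) //=.
rewrite big_nat_cond big1 ?add0r; last by move=> j /andP[/andP[_ hj] _]; exact: h1.
rewrite (big_cat_nat (n := r.+1)) ?(leqW hcr) //=.
rewrite [X in _ + X]big_nat_cond [X in _ + X]big1 ?addr0;
  last by move=> j /andP[/andP[hj _] _]; exact: h2.
by rewrite -{1}[c]add0n big_addn subSn.
Qed.

Lemma red (E1 E2 : nat -> nat -> K) (F1 F2 : nat -> bool -> K) (P : nat -> bool)
  (hP : forall c j, P (c + j)%N = P c (+) odd j)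
  (z1 : forall r c, (r < c)%N -> E1 r c = 0) (z2 : forall r c, (r < c)%N -> E2 r c = 0)
  (e1 : forall c d, E1 (c + d)%N c = F1 d (P c)) (e2 : forall c d, E2 (c + d)%N c = F2 d (P c))
  (hs : forall d p, \sum_(0 <= j < d.+1) F1 (d - j)%N (p (+) odd j) * F2 j p
           = \sum_(0 <= j < d.+1) F2 (d - j)%N (p (+) odd j) * F1 j p)
  n r c : (r < n)%N ->
  \sum_(0 <= j < n) E1 r j * E2 j c = \sum_(0 <= j < n) E2 r j * E1 j c.
Proof.
move=> hrn.
case: (ltnP r c) => hrc.
{ transitivity (0 : K); [apply: big1 | symmetry; apply: big1].
  all: move=> j _; case: (ltnP r j) => hj.
  all: rewrite ?(z1 _ _ hj) ?(z2 _ _ hj) ?mul0r //.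
  all: have hjc := leq_ltn_trans hj hrc.
  all: by rewrite ?(z1 _ _ hjc) ?(z2 _ _ hjc) mulr0. }
have zz : forall (A B : nat -> nat -> K), (forall r c, (r < c)%N -> A r c = 0) ->
   (forall r c, (r < c)%N -> B r c = 0) ->
   \sum_(0 <= j < n) A r j * B j c = \sum_(0 <= k < (r - c).+1) A r (k + c)%N * B (k + c)%N c.
  move=> A B zA zB; apply: sum_window => // j hj.
  - by rewrite zB ?mulr0.
  - by rewrite zA ?mul0r.
rewrite !zz //.
have -> : r = (c + (r - c))%N by rewrite subnKC.
move: (r - c)%N => d; rewrite addKn.
rewrite big_nat_cond [RHS]big_nat_cond.
transitivity (\sum_(0 <= j < d.+1 | true) F1 (d - j)%N (P c (+) odd j) * F2 j (P c)).
  rewrite [RHS]big_nat_cond; apply: eq_bigr => j /andP[/andP[_ hj] _].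
  have -> : (c + d = (j + c) + (d - j))%N by rewrite [(j + c)%N]addnC -addnA subnKC.
  by rewrite e1 [(j + c)%N]addnC hP e2.
rewrite hs [LHS]big_nat_cond; apply: eq_bigr => j /andP[/andP[_ hj] _].
have -> : (c + d = (j + c) + (d - j))%N by rewrite [(j + c)%N]addnC -addnA subnKC.
by rewrite e2 [(j + c)%N]addnC hP e1.
Qed.

End Gen.
Arguments Fg {K}.

Local Open Scope complex_scope.
Section S.
Variable R : realType.

Lemma cexpD (x y : R[i]) : cexp (x + y) = cexp x * cexp y.
Proof.
case: x => a1 b1; case: y => a2 b2 /=.
rewrite expRD cosD sinD !(rmorphD, rmorphB, rmorphN, rmorphM).
have h : 'i * 'i = -1 :> R[i] by rewrite -expr2 sqr_i.
set e1 := (expR a1)%:C. set e2 := (expR a2)%:C.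
set c1 := (cos b1)%:C. set c2 := (cos b2)%:C.
set s1 := (sin b1)%:C. set s2 := (sin b2)%:C.
transitivity (e1 * e2 * (c1 * c2 + ('i * 'i) * (s1 * s2) + 'i * (s1 * c2 + c1 * s2))).
  by rewrite h mulN1r.
ring.
Qed.
Lemma cexp0 : cexp (0 : R[i]) = 1.
Proof. by rewrite /cexp /= expR0 cos0 sin0 mulr0 addr0 mulr1. Qed.

Lemma cexp_neq0 (x : R[i]) : cexp x != 0.
Proof.
apply/negP => /eqP h.
have := cexpD x (-x); rewrite subrr cexp0 h mul0r => /eqP.
by rewrite oner_eq0.
Qed.

Lemma cexpN (x : R[i]) : cexp (- x) = (cexp x)^-1.
Proof.
have h := cexpD x (-x); rewrite subrr cexp0 in h.
have nz := cexp_neq0 x.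
by rewrite -[LHS]mul1r -(mulVf nz) -mulrA -h mulr1.
Qed.

Lemma csinhE (x : R[i]) : csinh x = (cexp x - (cexp x)^-1) / 2%:R.
Proof. by rewrite /csinh cexpN. Qed.
Lemma ccoshE (x : R[i]) : ccosh x = (cexp x + (cexp x)^-1) / 2%:R.
Proof. by rewrite /ccosh cexpN. Qed.

Lemma nz_m {x : R[i]} : x != 0 -> (x - x^-1) / 2%:R != 0 -> x * x - 1 != 0.
Proof.
move=> hx; apply: contra => /eqP h.
have -> : (x - x^-1) / 2%:R = (x * x - 1) / (2%:R * x) by field.
by rewrite h mul0r.
Qed.
Lemma nz_p {x : R[i]} : x != 0 -> (x + x^-1) / 2%:R != 0 -> x * x + 1 != 0.
Proof.
move=> hx; apply: contra => /eqP h.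
have -> : (x + x^-1) / 2%:R = (x * x + 1) / (2%:R * x) by field.
by rewrite h mul0r.
Qed.

Lemma cl_scal (u v : R[i]) :
  csinh (u - v) != 0 -> ccosh (u - v) != 0 -> csinh v != 0 -> ccosh v != 0 ->
  (- 'i * ccoth (u - v)) - ('i * ctanh v) = (-'i / (ccosh v * csinh (u - v))) * ccosh u
  /\ (-'i / (ccoth v * csinh (u - v) ^+ 2)) - (-'i / (ctanh (u - v) * ccosh v ^+ 2))
     = (-'i / (ccosh v * csinh (u - v))) * (lam_cl u v * ccosh u - ccosh u).
Proof.
have eu : cexp u = cexp (u - v) * cexp v by rewrite -cexpD subrK.
rewrite /lam_cl /ctanh /ccoth !csinhE !ccoshE eu.
have := cexp_neq0 v; have := cexp_neq0 (u - v).
move: (cexp v) (cexp (u - v)) => E F hF hE h1 h2 h3 h4.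
have := nz_m hF h1; have := nz_p hF h2; have := nz_m hE h3; have := nz_p hE h4.
move=> a1 a2 a3 a4; split; field; by rewrite ?hE ?hF ?a1 ?a2 ?a3 ?a4.
Qed.


Lemma q_scal (u v : R[i]) :
  csinh (u - v) != 0 -> ccosh (u - v) != 0 -> csinh v != 0 -> ccosh v != 0 ->
  (- 'i * ctanh (u - v)) - ('i * ccoth v) = - ('i / (csinh v * ccosh (u - v)) * ccosh u)
  /\ ('i / (ctanh v * ccosh (u - v) ^+ 2)) - ('i / (ccoth (u - v) * csinh v ^+ 2))
     = ('i / (csinh v * ccosh (u - v))) * (ccosh u - lam_q u v * ccosh u).
Proof.
have eu : cexp u = cexp (u - v) * cexp v by rewrite -cexpD subrK.
rewrite /lam_q /ctanh /ccoth !csinhE !ccoshE eu.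
have := cexp_neq0 v; have := cexp_neq0 (u - v).
move: (cexp v) (cexp (u - v)) => E F hF hE h1 h2 h3 h4.
have := nz_m hF h1; have := nz_p hF h2; have := nz_m hE h3; have := nz_p hE h4.
move=> a1 a2 a3 a4; split; field; by rewrite ?hE ?hF ?a1 ?a2 ?a3 ?a4.
Qed.

Definition xcl (u v : R[i]) (p : bool) := if p then - 'i * ccoth (u - v) else 'i * ctanh v.
Definition ycl (u v : R[i]) (p : bool) := if p then - 'i / (ccoth v * csinh (u - v) ^+ 2)
  else - 'i / (ctanh (u - v) * ccosh v ^+ 2).
Definition scl (u v : R[i]) := - 'i / (ccosh v * csinh (u - v)).
Definition xq (u v : R[i]) (p : bool) := if p then - 'i * ctanh (u - v) else 'i * ccoth v.
Definition yq (u v : R[i]) (p : bool) := if p then 'i / (ctanh v * ccosh (u - v) ^+ 2)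
  else 'i / (ccoth (u - v) * csinh v ^+ 2).
Definition sq (u v : R[i]) := 'i / (csinh v * ccosh (u - v)).

Lemma Mcl_low (u v : R[i]) r c : (r < c)%N -> Mcl_entry u v r c = 0.
Proof. by move=> h; rewrite /Mcl_entry ltn_eqF // ltnNge ltnW. Qed.
Lemma Mq_low (u v : R[i]) r c : (c < r)%N -> Mq_entry u v r c = 0.
Proof. by move=> h; rewrite /Mq_entry gtn_eqF // ltnNge ltnW. Qed.

Lemma Mcl_F (u v : R[i]) c d :
  Mcl_entry u v (c + d) c = Fg (xcl u v) (ycl u v) (scl u v) (lam_cl u v) d (odd c).
Proof.
rewrite /Mcl_entry /Fg; case: d => [|d]; first by rewrite addn0 eqxx.
have h1 : (c + d.+1 == c) = false by rewrite -{2}[c]addn0 eqn_add2l.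
have h2 : (c < c + d.+1)%N by rewrite -{1}[c]addn0 ltn_add2l.
rewrite h1 h2 addKn /scl /ycl.
case: (odd d.+1) => /=; last case: (odd c); ring.
Qed.

Lemma Mq_F (u v : R[i]) c d :
  Mq_entry u v c (c + d) = Fg (xq u v) (yq u v) (sq u v) (lam_q u v) d (odd c).
Proof.
rewrite /Mq_entry /Fg; case: d => [|d]; first by rewrite addn0 eqxx.
have h1 : (c == c + d.+1) = false by rewrite -{1}[c]addn0 eqn_add2l.
have h2 : (c < c + d.+1)%N by rewrite -{1}[c]addn0 ltn_add2l.
rewrite h1 h2 addKn /sq /yq.
case: (odd d.+1) => /=; last case: (odd c); ring.
Qed.

End S.
Arguments xcl {R}. Arguments ycl {R}. Arguments scl {R}.
Arguments xq {R}. Arguments yq {R}. Arguments sq {R}.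

Theorem mainTheorem4 (R : realType) (N : nat) (u v w : R[i]) :
  csinh (u - v) != 0 -> ccosh (u - v) != 0 -> csinh v != 0 -> ccosh v != 0 ->
  csinh (u - w) != 0 -> ccosh (u - w) != 0 -> csinh w != 0 -> ccosh w != 0 ->
  (Mcl N u v *m Mcl N u w - Mcl N u w *m Mcl N u v = 0) /\
  (Mq N u v *m Mq N u w - Mq N u w *m Mq N u v = 0).
Proof.
move=> a1 a2 a3 a4 b1 b2 b3 b4.
have hP : forall c j, odd (c + j).+1 = odd c.+1 (+) odd j.
  by move=> c j; rewrite -addSn oddD.
split.
- have [hxv hyv] := @cl_scal _ u v a1 a2 a3 a4.
  have [hxw hyw] := @cl_scal _ u w b1 b2 b3 b4.
  have hs := @sym _ (xcl u v) (ycl u v) (xcl u w) (ycl u w) (scl u v) (scl u w) (lam_cl u v) (lam_cl u w).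
  have hI : forall p, scl u v * (xcl u w p - xcl u w (~~ p)) = scl u w * (xcl u v p - xcl u v (~~ p)).
    case; rewrite /= /xcl /scl /=; first by rewrite hxv hxw; ring.
    by rewrite -[_ - (- _ * _)]opprB -[X in _ = _ * X]opprB hxv hxw; ring.
  have hII : forall p, (lam_cl u v - lam_cl u w) * (scl u v * (xcl u w p - xcl u w (~~ p)))
     + scl u v * (ycl u w p - ycl u w (~~ p)) - scl u w * (ycl u v p - ycl u v (~~ p)) = 0.
    case; rewrite /= /xcl /ycl /scl /=; first by rewrite hxw hyw hyv; ring.
    rewrite -[_ - (- _ * _)]opprB -[_ / (ctanh (u - w) * _) - _]opprB.
    rewrite -[_ / (ctanh (u - v) * _) - _]opprB hxw hyw hyv; ring.
  have {}hs := hs hI hII.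
  apply/eqP; rewrite subr_eq0; apply/eqP/matrixP => a b; rewrite !mxE.
  under eq_bigr do rewrite !mxE. under [RHS]eq_bigr do rewrite !mxE.
  have := @red _ (fun r c => Mcl_entry u v r.+1 c.+1) (fun r c => Mcl_entry u w r.+1 c.+1)
     _ _ (fun c => odd c.+1) hP _ _ _ _ hs _ _ b (ltn_ord a).
  rewrite !big_mkord; apply.
  + by move=> r c h; apply: Mcl_low.
  + by move=> r c h; apply: Mcl_low.
  + by move=> c d; rewrite /= -addSn Mcl_F.
  + by move=> c d; rewrite /= -addSn Mcl_F.
- have [hxv hyv] := @q_scal _ u v a1 a2 a3 a4.
  have [hxw hyw] := @q_scal _ u w b1 b2 b3 b4.
  have hs := @sym _ (xq u w) (yq u w) (xq u v) (yq u v) (sq u w) (sq u v) (lam_q u w) (lam_q u v).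
  have hI : forall p, sq u w * (xq u v p - xq u v (~~ p)) = sq u v * (xq u w p - xq u w (~~ p)).
    case; rewrite /= /xq /sq /=; first by rewrite hxv hxw; ring.
    by rewrite -[_ - (- _ * _)]opprB -[X in _ = _ * X]opprB hxv hxw; ring.
  have hII : forall p, (lam_q u w - lam_q u v) * (sq u w * (xq u v p - xq u v (~~ p)))
     + sq u w * (yq u v p - yq u v (~~ p)) - sq u v * (yq u w p - yq u w (~~ p)) = 0.
    case; rewrite /= /xq /yq /sq /=; first by rewrite hxv hyw hyv; ring.
    rewrite -[_ - (- _ * _)]opprB -[_ / (ccoth (u - v) * _) - _]opprB.
    rewrite -[_ / (ccoth (u - w) * _) - _]opprB hxv hyw hyv; ring.
  have {}hs := hs hI hII.
  apply/eqP; rewrite subr_eq0; apply/eqP/matrixP => a b; rewrite !mxE.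
  under eq_bigr do rewrite !mxE mulrC. under [RHS]eq_bigr do rewrite !mxE mulrC.
  have := @red _ (fun r c => Mq_entry u w c.+1 r.+1) (fun r c => Mq_entry u v c.+1 r.+1)
     _ _ (fun c => odd c.+1) hP _ _ _ _ hs _ _ a (ltn_ord b).
  rewrite !big_mkord; apply.
  + by move=> r c h; apply: Mq_low.
  + by move=> r c h; apply: Mq_low.
  + by move=> c d; rewrite /= -addSn Mq_F.
  + by move=> c d; rewrite /= -addSn Mq_F.
Qed.
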